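(* Let $\lambda>1$ and suppose $(P_\lambda)$ is feasible. Let $x^*$ be an optimal solution to $(P_\lambda)$ and $\mathcal{L}$ a laminar decomposition of $x^*$; let $x'$ and $\mathcal{L}'$ be such that $(x',\mathcal{L}')$ is a rainbow-free decomposition with $\mathrm{supp}(x')\subseteq\mathrm{supp}(x^* )$, $\mathcal{L}\subseteq\mathcal{L}'$ and $x'(\delta(S))\le x^*(\delta(S))$ for all $S\in\mathcal{S}$; and let $T$ be a spanning tree of $G$ obtained as the concatenation of spanning trees $T_L\subseteq\mathrm{supp}(x')$ of $G^{\mathcal{L}'}_L$, one for each $L\in\mathcal{L}'$. Let $y^*$ be an optimal solution to $\max_{y\in\mathbb{R}^{\mathcal{S}}_{\ge0}}g_\lambda(y)$. Then $c(T)\le\sum_ec^{y^*}_ex^*_e=\sum_ec_ex^*_e+\lambda\sum_{S\in\mathcal{S}}b_Sy^*_S$.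
   Context: Setting: $G=(V,E)$ undirected connected graph, costs $c_e\ge0$, a chain $\mathcal{S}$ of node sets $S_1\subsetneq\dots\subsetneq S_\ell\subsetneq V$, integers $b_S$. $E(S)$ = edges with both ends in $S$, $\delta(S)$ = edges with exactly one end in $S$, $z(F)=\sum_{e\in F}z_e$, $\mathrm{supp}(z)=\{e:z_e>0\}$, $c(T)=\sum_{e\in T}c_e$. $P_{ST}(G)=\{x\in\mathbb{R}^E_{\ge0}: x(E(S))\le|S|-1\ \forall\emptyset\ne S\subsetneq V,\ x(E)=|V|-1\}$. $(P_\lambda)$: minimize $\sum_ec_ex_e$ over $x\in P_{ST}(G)$ with $x(\delta(S))\le\lambda b_S$ for all $S\in\mathcal{S}$. For $y\in\mathbb{R}^{\mathcal{S}}$, $c^y_e=c_e+\sum_{S\in\mathcal{S}:e\in\delta(S)}y_S$ and $g_\lambda(y)=\min_{x\in P_{ST}(G)}\big(\sum_ec^y_ex_e-\lambda\sum_Sb_Sy_S\big)$. A laminar decomposition of $x\in P_{ST}(G)$ is an inclusion-wise maximal laminar family of nonempty sets $A\subseteq V$ with $x(E(A))=|A|-1$. For a laminar family $\mathcal{L}$ and $L\in\mathcal{L}$, $G^{\mathcal{L}}_L$ is obtained from $(L,E(L))$ by contracting the maximal members of $\mathcal{L}$ strictly contained in $L$. With $\mathcal{S}_e=\{S\in\mathcal{S}:e\in\delta(S)\}$, edges $e,f$ form a rainbow if $\mathcal{S}_e\subseteq\mathcal{S}_f$ or $\mathcal{S}_f\subseteq\mathcal{S}_e$; $(x,\mathcal{L})$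 is a rainbow-free decomposition if $\mathcal{L}$ is a laminar decomposition of $x$ and for every $L\in\mathcal{L}$ no two edges of $\mathrm{supp}(x)\cap E(G^{\mathcal{L}}_L)$ form a rainbow. *)

(* Defs.v *)
(* Vectors in R^E / R^S are functions
   {set V} -> R whose values outside E / the chain are irrelevant. *)
From HB Require Import structures.
From mathcomp Require Import all_boot all_order all_algebra.
From mathcomp Require Import reals.
Set Implicit Arguments. Unset Strict Implicit. Unset Printing Implicit Defensive.
Import Order.TTheory GRing.Theory Num.Theory.
Local Open Scope ring_scope.

Section Defs.
Variables (R : realType) (V : finType).
Implicit Types (E F Sc T : {set {set V}}) (S A B C L : {set V})
  (x y c : {set V} -> R) (bS : {set V} -> int).

Definition simple_graph E := forall e, e \in E -> #|e| = 2%N.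
Definition graph_connected E :=
  forall a0 b0 : V, connect [rel p q | [set p; q] \in E] a0 b0.

Definition is_chain Sc :=
  (forall A B, A \in Sc -> B \in Sc -> (A \subset B) || (B \subset A)) /\
  (forall A, A \in Sc -> A \proper [set: V]).

Definition Eset E S := [set e in E | e \subset S].
Definition dset E S := [set e in E | #|e :&: S| == 1%N].
Definition xsum x F := \sum_(e in F) x e.
Definition supp E x := [set e in E | 0 < x e].

Definition in_PST E x :=
  (forall e, e \in E -> 0 <= x e) /\
  (forall S, S != set0 -> S \proper [set: V] -> xsum x (Eset E S) <= #|S|%:R - 1) /\
  xsum x E = #|V|%:R - 1.

Definition feasible E Sc bS (lam : R) x :=
  in_PST E x /\ forall S, S \in Sc -> xsum x (dset E S) <= lam * (bS S)%:~R.

Definition lin_cost E c x := \sum_(e in E) c e * x e.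

Definition opt_primal E Sc bS lam c x :=
  feasible E Sc bS lam x /\
  forall x', feasible E Sc bS lam x' -> lin_cost E c x <= lin_cost E c x'.

Definition cy E Sc c y (e : {set V}) := c e + \sum_(S in Sc | e \in dset E S) y S.

Definition gobj E Sc bS (lam : R) c y x :=
  \sum_(e in E) cy E Sc c y e * x e - lam * \sum_(S in Sc) (bS S)%:~R * y S.

Definition is_g_value E Sc bS lam c y (v : R) :=
  (exists x, in_PST E x /\ gobj E Sc bS lam c y x = v) /\
  (forall x, in_PST E x -> v <= gobj E Sc bS lam c y x).

Definition nonneg_on Sc y := forall S, S \in Sc -> 0 <= y S.

Definition opt_dual E Sc bS lam c y :=
  nonneg_on Sc y /\
  exists v, is_g_value E Sc bS lam c y v /\
    forall y' v', nonneg_on Sc y' -> is_g_value E Sc bS lam c y' v' -> v' <= v.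

Definition tight E x A := (A != set0) && (xsum x (Eset E A) == #|A|%:R - 1).

Definition laminar F :=
  forall A B, A \in F -> B \in F ->
    [|| A \subset B, B \subset A | [disjoint A & B]].

Definition laminar_decomp E x F :=
  laminar F /\ (forall A, A \in F -> tight E x A) /\
  forall F', laminar F' -> (forall A, A \in F' -> tight E x A) ->
    F \subset F' -> F' = F.

Definition children F L :=
  [set C in F | (C \proper L) && ~~ [exists D in F, (C \proper D) && (D \proper L)]].

(* edges of G^F_L (loops created by contraction removed) *)
Definition Eg E F L :=
  [set e in Eset E L | [forall C in children F L, ~~ (e \subset C)]].

(* two vertices of L represent the same vertex of G^F_L *)
Definition sameclass F L (a0 b0 : V) :=
  (a0 == b0) || [exists C in children F L, (a0 \in C) && (b0 \in C)].

Definition connects F L T :=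
  forall a0 b0, a0 \in L -> b0 \in L ->
    connect [rel p q | [&& p \in L, q \in L & sameclass F L p q || ([set p; q] \in T)]] a0 b0.

Definition spanning_tree_contr E F L T :=
  T \subset Eg E F L /\ connects F L T /\ forall e, e \in T -> ~ connects F L (T :\ e).

Definition Sfam E Sc (e : {set V}) := [set S in Sc | e \in dset E S].

Definition rainbow E Sc e f :=
  (Sfam E Sc e \subset Sfam E Sc f) || (Sfam E Sc f \subset Sfam E Sc e).

Definition rainbow_free_decomp E Sc x F :=
  in_PST E x /\ laminar_decomp E x F /\
  forall L, L \in F -> forall e f,
    e \in supp E x :&: Eg E F L -> f \in supp E x :&: Eg E F L -> e != f ->
    ~~ rainbow E Sc e f.

End Defs.

(* Main.v *)
Require Import Defs.
From HB Require Import structures.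
From mathcomp Require Import all_boot all_order all_algebra.
From mathcomp Require Import reals.
From mathcomp Require classical_sets.
From mathcomp Require Import ring lra zify.
From Stdlib Require Import FunctionalExtensionality Classical.
Import Order.TTheory GRing.Theory Num.Theory.

Module M_Farkas.
Set Implicit Arguments. Unset Strict Implicit. Unset Printing Implicit Defensive.
Import Order.TTheory GRing.Theory Num.Theory.
Local Open Scope ring_scope.

Section Farkas.
Variables (R : realFieldType) (X : finType).

Definition dot (a x : X -> R) := \sum_(i : X) a i * x i.

Inductive lderiv (I : finType) (sys : I -> (X -> R) * R) : (X -> R) -> R -> Prop :=
| d_row i : lderiv sys (sys i).1 (sys i).2
| d_zero : lderiv sys (fun _ => 0) 0
| d_add a b a' b' : lderiv sys a b -> lderiv sys a' b' ->
     lderiv sys (fun j => a j + a' j) (b + b')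
| d_scale k a b : 0 <= k -> lderiv sys a b -> lderiv sys (fun j => k * a j) (k * b)
| d_weak a b b' : b <= b' -> lderiv sys a b -> lderiv sys a b'.

Definition sat (I : finType) (sys : I -> (X -> R) * R) x :=
  forall i, dot (sys i).1 x <= (sys i).2.

Lemma dotD a a' x : dot (fun j => a j + a' j) x = dot a x + dot a' x.
Proof. by rewrite /dot -big_split /=; apply: eq_bigr => i _; rewrite mulrDl. Qed.
Lemma dotZ k a x : dot (fun j => k * a j) x = k * dot a x.
Proof. by rewrite /dot mulr_sumr; apply: eq_bigr => i _; rewrite mulrA. Qed.
Lemma dot0 x : dot (fun _ => 0) x = 0.
Proof. by rewrite /dot big1 // => i _; rewrite mul0r. Qed.

Lemma deriv_sound (I : finType) (sys : I -> (X -> R) * R) x a b :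
  sat sys x -> lderiv sys a b -> dot a x <= b.
Proof.
move=> hs; elim => [i|||k a0 b0 hk _ IH|a0 b0 b1 hb _ IH].
- exact: hs.
- by rewrite dot0.
- by move=> a0 b0 a1 b1 _ IH1 _ IH2; rewrite dotD lerD.
- by rewrite dotZ ler_wpM2l.
- exact: le_trans hb.
Qed.

Lemma deriv_lift (I J : finType) (s1 : I -> (X -> R) * R) (s2 : J -> (X -> R) * R) a b :
  (forall i, lderiv s2 (s1 i).1 (s1 i).2) -> lderiv s1 a b -> lderiv s2 a b.
Proof.
move=> h; elim => [i|||k a0 b0 hk _ IH|a0 b0 b1 hb _ IH].
- exact: h.
- exact: d_zero.
- by move=> *; apply: d_add.
- exact: d_scale.
- exact: d_weak IH.
Qed.

Lemma deriv_ext (I : finType) (sys : I -> (X -> R) * R) a a' b :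
  a =1 a' -> lderiv sys a b -> lderiv sys a' b.
Proof. by move=> h; rewrite (functional_extensionality _ _ h). Qed.

Lemma sandwich (ls us : seq R) :
  (forall l u, l \in ls -> u \in us -> l <= u) ->
  exists t, (forall l, l \in ls -> l <= t) /\ (forall u, u \in us -> t <= u).
Proof.
elim: ls => [|l ls IH] h.
  elim: us h => [|u us IHu] h; first by exists 0.
  have [t [_ ht]] := IHu (fun l u0 hl hu => h l u0 hl (@mem_behead _ (u :: us) _ hu)).
  exists (Num.min u t); split => // u'; rewrite inE => /predU1P[->|hu].
    by rewrite ge_min lexx.
  by rewrite ge_min ht ?orbT.
have [t [ht1 ht2]] : exists t, (forall l, l \in ls -> l <= t) /\ (forall u, u \in us -> t <= u).
  by apply: IH => l0 u hl hu; apply: h => //; rewrite inE hl orbT.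
exists (Num.max l t); split.
  move=> l0; rewrite inE => /predU1P[->|hl]; first by rewrite le_max lexx.
  by rewrite le_max (ht1 _ hl) orbT.
by move=> u hu; rewrite ge_max ht2 // h // inE eqxx.
Qed.

Definition upd (x : X -> R) j t := fun i => if i == j then t else x i.

Lemma dot_upd a x j t : dot a (upd x j t) = dot a x - a j * x j + a j * t.
Proof.
rewrite /dot (bigD1 j) //= [in RHS](bigD1 j) //= /upd eqxx.
have -> : \sum_(i | i != j) a i * (if i == j then t else x i) = \sum_(i | i != j) a i * x i.
  by apply: eq_bigr => i /negbTE ->.
by rewrite addrC (addrC (a j * x j)) addrK.
Qed.

Lemma dot_indep a x j t : a j = 0 -> dot a (upd x j t) = dot a x.
Proof. by move=> h; rewrite dot_upd h !mul0r subr0 addr0. Qed.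

Definition triv : (X -> R) * R := (fun _ => 0, 0).

Definition fm_sys (I : finType) (sys : I -> (X -> R) * R) j : (I + (I * I)) -> (X -> R) * R :=
  fun k => match k with
  | inl i => if (sys i).1 j == 0 then sys i else triv
  | inr (p, n) => if (0 < (sys p).1 j) && ((sys n).1 j < 0) then
      (fun i => - (sys n).1 j * (sys p).1 i + (sys p).1 j * (sys n).1 i,
       - (sys n).1 j * (sys p).2 + (sys p).1 j * (sys n).2)
      else triv
  end.

Lemma fm_lift (I : finType) (sys : I -> (X -> R) * R) j k :
  lderiv sys (fm_sys sys j k).1 (fm_sys sys j k).2.
Proof.
case: k => [i|[p n]] /=.
  by case: ifP => _; [apply: d_row | apply: d_zero].
case: ifP => [/andP[hp hn]|_]; last exact: d_zero.
apply: d_add; apply: d_scale; try exact: d_row.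
  by rewrite oppr_ge0 ltW.
exact: ltW.
Qed.

Lemma fm_zero (I : finType) (sys : I -> (X -> R) * R) j k : (fm_sys sys j k).1 j = 0.
Proof.
case: k => [i|[p n]] /=; first by case: ifP => // /eqP.
case: ifP => // _ /=; by rewrite mulNr mulrC addNr.
Qed.

Lemma fm_support (I : finType) (sys : I -> (X -> R) * R) j (s : pred X) k i :
  (forall i0 i, ~~ s i -> (sys i0).1 i = 0) -> ~~ s i -> (fm_sys sys j k).1 i = 0.
Proof.
move=> h hi; case: k => [i0|[p n]] /=; first by case: ifP => // _; apply: h.
by case: ifP => // _ /=; rewrite (h p i hi) (h n i hi) !mulr0 addr0.
Qed.

Lemma fm_sat (I : finType) (sys : I -> (X -> R) * R) j x :
  sat (fm_sys sys j) x -> exists t, sat sys (upd x j t).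
Proof.
move=> hs.
pose lb i := ((sys i).2 - (dot (sys i).1 x - (sys i).1 j * x j)) / (sys i).1 j.
pose ls := [seq lb i | i <- enum I & (sys i).1 j < 0].
pose us := [seq lb i | i <- enum I & 0 < (sys i).1 j].
have key : forall l u, l \in ls -> u \in us -> l <= u.
  move=> l u /mapP[n]; rewrite mem_filter => /andP[hn _] -> /mapP[p].
  rewrite mem_filter => /andP[hp _] ->.
  have := hs (inr (p, n)); rewrite /= hp hn /= dotD !dotZ => h.
  rewrite /lb.
  set Dp := dot (sys p).1 x - (sys p).1 j * x j in h *.
  set Dn := dot (sys n).1 x - (sys n).1 j * x j in h *.
  have hDp : dot (sys p).1 x = Dp + (sys p).1 j * x j by rewrite /Dp subrK.
  have hDn : dot (sys n).1 x = Dn + (sys n).1 j * x j by rewrite /Dn subrK.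
  rewrite hDp hDn in h.
  move: h hp hn; set ap := (sys p).1 j; set an := (sys n).1 j.
  set bp := (sys p).2; set bn := (sys n).2 => h hp hn.
  set l0 := (bn - Dn) / an; set u0 := (bp - Dp) / ap.
  have hl : bn - Dn = l0 * an by rewrite /l0 mulfVK // lt_eqF.
  have hu : bp - Dp = u0 * ap by rewrite /u0 mulfVK // gt_eqF.
  have h2 : 0 <= ap * (bn - Dn) - an * (bp - Dp).
    rewrite subr_ge0 !mulrBr; move: h; rewrite !mulrDr !mulrN !mulNr.
    move=> hh; rewrite -subr_ge0; rewrite -subr_ge0 in hh; apply: (le_trans hh); rewrite le_eqVlt; apply/orP; left; apply/eqP; rewrite /ap /an /bp /bn; ring.
  rewrite hl hu in h2.
  have hk : ap * an < 0 by rewrite pmulr_rlt0.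
  have : 0 <= (ap * an) * (l0 - u0) by move: h2; rewrite mulrBr; congr (0 <= _); ring.
  by rewrite nmulr_rge0 // subr_le0.
have [t [ht1 ht2]] := sandwich key.
exists t => i; rewrite dot_upd.
have [hz|hnz] := eqVneq ((sys i).1 j) 0.
  have := hs (inl i); rewrite /= hz eqxx /= => h.
  by rewrite !mul0r subr0 addr0.
case: (ltgtP ((sys i).1 j) 0) => [hn|hp|]; last by move/eqP: hnz.
- have : lb i <= t by apply: ht1; apply/mapP; exists i => //; rewrite mem_filter hn mem_enum.
  rewrite /lb ler_ndivrMr // => h.
  by rewrite -lerBrDl mulrC.
- have : t <= lb i by apply: ht2; apply/mapP; exists i => //; rewrite mem_filter hp mem_enum.
  rewrite /lb ler_pdivlMr // => h.
  by rewrite -lerBrDl mulrC.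
Qed.

Lemma farkas_gen (s : seq X) : forall (I : finType) (sys : I -> (X -> R) * R),
  (forall i0 i, i \notin s -> (sys i0).1 i = 0) ->
  (forall x, ~ sat sys x) -> exists2 b, b < 0 & lderiv sys (fun _ => 0) b.
Proof.
elim: s => [|j s IH] I sys hsupp hinf.
  have : ~ sat sys (fun _ => 0) by apply: hinf.
  have [i hi|] := pickP (fun i => (sys i).2 < 0).
    move=> _; exists (sys i).2 => //; apply: deriv_ext (d_row _ i) => k.
    by apply: hsupp.
  move=> hall; case => i; rewrite /dot big1 => [|k _]; last by rewrite mulr0.
  by move: (hall i) => /negbT; rewrite -leNgt.
have hinf' : forall x, ~ sat (fm_sys sys j) x.
  by move=> x /fm_sat [t ht]; apply: (hinf _ ht).
have hsupp' : forall k i, i \notin s -> (fm_sys sys j k).1 i = 0.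
  move=> k i hi; have [->|hij] := eqVneq i j; first by apply: fm_zero.
  apply: (@fm_support _ _ _ (mem (j :: s))); last by rewrite inE negb_or hij.
  by move=> i0 i1; apply: hsupp.
have [b hb hd] := IH _ (fm_sys sys j) hsupp' hinf'.
by exists b => //; apply: deriv_lift hd => k; apply: fm_lift.
Qed.

Theorem farkas (I : finType) (sys : I -> (X -> R) * R) :
  (forall x, ~ sat sys x) -> exists2 b, b < 0 & lderiv sys (fun _ => 0) b.
Proof. by apply: (@farkas_gen (enum X)) => i0 i; rewrite mem_enum. Qed.

Definition join (I K : finType) (sA : I -> (X -> R) * R) (sK : K -> (X -> R) * R) :
  I + K -> (X -> R) * R := fun z => match z with inl i => sA i | inr k => sK k end.

Lemma deriv_decomp (I K : finType) (P : (X -> R) -> Prop)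
  (sA : I -> (X -> R) * R) (sK : K -> (X -> R) * R) a b :
  (forall x, P x -> sat sA x) -> lderiv (join sA sK) a b ->
  exists2 w : K -> R, (forall k, 0 <= w k) &
    forall x, P x -> dot a x - \sum_k w k * dot (sK k).1 x <= b - \sum_k w k * (sK k).2.
Proof.
move=> hP; elim => [[i|k]|||k0 a0 b0 hk _ [w hw IH]|a0 b0 b1 hb _ [w hw IH]].
- exists (fun _ => 0) => // x hx; rewrite !big1 ?subr0 => [|k _|k _]; try by rewrite mul0r.
  exact: hP.
- exists (fun k' => if k' == k then 1 else 0) => [k'|x hx]; first by case: ifP.
  rewrite (bigD1 k) //= [X in _ <= _ - X](bigD1 k) //= !eqxx !mul1r !big1 ?addr0 ?subrr //.
    by move=> k' /negbTE ->; rewrite mul0r.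
  by move=> k' /negbTE ->; rewrite mul0r.
- exists (fun _ => 0) => // x hx; rewrite dot0 !big1 ?subr0 // => k _; by rewrite mul0r.
- move=> a0 b0 a1 b1 _ [w1 hw1 IH1] _ [w2 hw2 IH2].
  exists (fun k => w1 k + w2 k) => [k|x hx]; first by rewrite addr_ge0.
  have := lerD (IH1 x hx) (IH2 x hx); rewrite dotD.
  have -> : \sum_k (w1 k + w2 k) * dot (sK k).1 x =
     \sum_k w1 k * dot (sK k).1 x + \sum_k w2 k * dot (sK k).1 x.
    by rewrite -big_split; apply: eq_bigr => k _; rewrite mulrDl.
  have -> : \sum_k (w1 k + w2 k) * (sK k).2 = \sum_k w1 k * (sK k).2 + \sum_k w2 k * (sK k).2.
    by rewrite -big_split; apply: eq_bigr => k _; rewrite mulrDl.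
  move=> h; rewrite -subr_ge0; rewrite -subr_ge0 in h; apply: le_trans h _; rewrite le_eqVlt; apply/orP; left; apply/eqP; ring.
- exists (fun k => k0 * w k) => [k|x hx]; first by rewrite mulr_ge0.
  have := ler_wpM2l hk (IH x hx); rewrite dotZ.
  have -> : \sum_k (k0 * w k) * dot (sK k).1 x = k0 * \sum_k w k * dot (sK k).1 x.
    by rewrite mulr_sumr; apply: eq_bigr => k _; rewrite mulrA.
  have -> : \sum_k (k0 * w k) * (sK k).2 = k0 * \sum_k w k * (sK k).2.
    by rewrite mulr_sumr; apply: eq_bigr => k _; rewrite mulrA.
  by rewrite !mulrBr.
- exists w => // x hx; apply: le_trans (IH x hx) _; by rewrite lerD2r.
Qed.

End Farkas.

End M_Farkas.
Import M_Farkas.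

Module M_Comb.
Set Implicit Arguments. Unset Strict Implicit. Unset Printing Implicit Defensive.
Import Order.TTheory GRing.Theory Num.Theory.

Section Lam.
Variable V : finType.
Implicit Types (F : {set {set V}}) (A B C D : {set V}).

Lemma conn_ind (e : rel V) (P : V -> Prop) a b :
  P a -> (forall x y, P x -> e x y -> P y) -> connect e a b -> P b.
Proof.
move=> Pa hs /connectP[p hp ->]; elim: p a Pa hp => //= y p IH a Pa /andP[hay hp].
by apply: IH hp; apply: hs hay.
Qed.

Lemma ch_in F A C : C \in children F A -> C \in F /\ C \proper A.
Proof. by rewrite inE => /andP[-> /andP[-> _]]. Qed.

Lemma ch_disj F A C D : laminar F -> C \in children F A -> D \in children F A ->
  C != D -> [disjoint C & D].
Proof.
move=> hlam hC hD hCD.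
have [hCF hCA] := ch_in hC; have [hDF hDA] := ch_in hD.
case/or3P: (hlam _ _ hCF hDF) => // hsub.
- move: hC; rewrite inE => /and3P[_ _ /existsP]; case; exists D.
  by rewrite hDF hDA properEneq hCD hsub.
- move: hD; rewrite inE => /and3P[_ _ /existsP]; case; exists C.
  by rewrite hCF hCA properEneq eq_sym hCD hsub.
Qed.

Lemma ch_above F A B : B \in F -> B \proper A ->
  exists2 C, C \in children F A & B \subset C.
Proof.
move=> hBF hBA.
pose P := fun D => [&& D \in F, B \subset D & D \proper A].
have PB : P B by rewrite /P hBF subxx hBA.
case: (arg_maxnP (fun D => #|D|) PB) => C /and3P[hCF hBC hCA] hmax.
exists C => //; rewrite inE hCF hCA /=; apply/existsP => -[D /and3P[hDF hCD hDA]].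
have := hmax D; rewrite /P hDF hDA (subset_trans hBC (proper_sub hCD)) /= => /(_ isT).
by rewrite leqNgt proper_card.
Qed.

Lemma ch_uniq F A C D (X : {set V}) : laminar F -> C \in children F A -> D \in children F A ->
  X != set0 -> X \subset C -> X \subset D -> C = D.
Proof.
move=> hlam hC hD /set0Pn[v hv] hXC hXD; apply/eqP; apply: contraT => hne.
have := ch_disj hlam hC hD hne; rewrite disjoint_subset => /subsetP/(_ v).
by rewrite (subsetP hXC) // inE (subsetP hXD) // => /(_ isT).
Qed.

Lemma lam_add F A : laminar F ->
  (forall B, B \in F -> [|| A \subset B, B \subset A | [disjoint A & B]]) ->
  laminar (A |: F).
Proof.
move=> hlam h X Y; rewrite !inE => /predU1P[->|hX] /predU1P[->|hY].
- by rewrite subxx.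
- exact: h.
- case/or3P: (h X hX) => H; rewrite ?H ?orbT //; by rewrite disjoint_sym H !orbT.
- exact: hlam.
Qed.


Lemma card_sumb (P : {set V}) : #|P| = \sum_(v : V) (v \in P).
Proof. by rewrite -sum1_card big_mkcond; apply: eq_bigr => v _; case: (v \in P). Qed.

Lemma card_sumb2 (P : {set {set V}}) : #|P| = \sum_(v : {set V}) (v \in P).
Proof. by rewrite -sum1_card big_mkcond; apply: eq_bigr => v _; case: (v \in P). Qed.

Section Part.
Variables (F : {set {set V}}) (A : {set V}).
Hypothesis hlam : laminar F.
Hypothesis hcov : forall v, v \in A -> exists2 C, C \in children F A & v \in C.

Lemma sum_sub (X : {set V}) : X != set0 ->
  (\sum_(C in children F A) (X \subset C) = [exists C in children F A, X \subset C])%N.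
Proof.
move=> hX; case: existsP => [[C0 /andP[hC0 hXC0]]|hn].
  rewrite (bigD1 C0) //= hXC0 big1 // => C /andP[hC hCC0].
  suff -> : (X \subset C) = false by [].
  by apply/negbTE/negP => hXC; move/eqP: hCC0; apply; apply: (ch_uniq hlam hC hC0 hX).
rewrite big1 // => C hC; suff -> : (X \subset C) = false by [].
by apply/negbTE/negP => h; apply: hn; exists C; rewrite hC.
Qed.

Lemma sum_card (X : {set V}) : X \subset A ->
  (\sum_(C in children F A) #|X :&: C| = #|X|)%N.
Proof.
move=> hXA.
under eq_bigr => C _ do rewrite card_sumb.
rewrite exchange_big /= card_sumb; apply: eq_bigr => v _.
under eq_bigr => C _ do rewrite inE.
case hv: (v \in X) => /=; last by rewrite big1.
have h1 : [set v] != set0 by apply/set0Pn; exists v; rewrite inE.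
under eq_bigr => C _ do rewrite -sub1set.
rewrite sum_sub //; suff -> : [exists C in children F A, [set v] \subset C] by [].
apply/existsP; have [C hC hvC] := hcov (subsetP hXA v hv).
by exists C; rewrite hC sub1set.
Qed.

End Part.


Lemma ch_cover F A v : (forall v, [set v] \in F) -> (1 < #|A|)%N -> v \in A ->
  exists2 C, C \in children F A & v \in C.
Proof.
move=> hs hA hv; have hp : [set v] \proper A by rewrite properEcard sub1set hv cards1.
by have [C hC] := ch_above (hs v) hp; rewrite sub1set => hvC; exists C.
Qed.

Section Graph.
Variables (F : {set {set V}}) (A : {set V}).
Hypothesis hlam : laminar F.
Hypothesis hne : forall C, C \in children F A -> C != set0.
Hypothesis hcov : forall v, v \in A -> exists2 C, C \in children F A & v \in C.

Definition rT (Fs : {set {set V}}) :=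
  [rel p q | [&& p \in A, q \in A & sameclass F A p q || ([set p; q] \in Fs)]].

Lemma rT_sym Fs : symmetric (rT Fs).
Proof.
move=> p q /=; have -> : sameclass F A p q = sameclass F A q p.
  rewrite /sameclass eq_sym; congr (_ || _).
  by apply/existsP/existsP => -[C /andP[hC /andP[h1 h2]]]; exists C; rewrite hC h1 h2.
by rewrite setUC andbCA.
Qed.

Lemma cT_sym Fs : connect_sym (rT Fs).
Proof. exact/sym_connect_sym/rT_sym. Qed.

Definition comp Fs p := [set q | connect (rT Fs) p q].
Definition nc Fs := #|[set comp Fs p | p in A]|.

Lemma comp_eq Fs p q : connect (rT Fs) p q -> comp Fs p = comp Fs q.
Proof.
move=> hpq; apply/setP => z; rewrite !inE; apply/idP/idP => h.
  by apply: connect_trans h; rewrite cT_sym.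
exact: connect_trans h.
Qed.

Lemma cT_mono (Fs1 Fs2 : {set {set V}}) a b : Fs1 \subset Fs2 -> connect (rT Fs1) a b -> connect (rT Fs2) a b.
Proof.
move=> hs; apply: connect_sub => x y /= /and3P[hx hy h]; apply: connect1 => /=.
rewrite hx hy /=; case/orP: h => [->//|h]; by rewrite (subsetP hs) ?orbT.
Qed.

Lemma nc0 : nc set0 = #|children F A|.
Proof.
have key : forall p C, C \in children F A -> p \in C -> comp set0 p = C.
  move=> p C hC hp; have [_ /proper_sub hCA] := ch_in hC.
  apply/setP => q; rewrite inE; apply/idP/idP => h.
    apply: (conn_ind (P := fun z => z \in C)) h => // x y hx /= /and3P[_ hy].
    rewrite in_set0 orbF /sameclass => /orP[/eqP <-//|/existsP[D /and3P[hD hxD hyD]]].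
    have ne1 : [set x] != set0 by apply/set0Pn; exists x; rewrite inE.
    by rewrite -(ch_uniq hlam hD hC ne1) ?sub1set.
  apply: connect1 => /=; rewrite !(subsetP hCA) //= /sameclass; apply/orP; left.
  by apply/orP; right; apply/existsP; exists C; rewrite hC hp h.
rewrite /nc; suff -> : [set comp set0 p | p in A] = children F A by [].
apply/setP => C; apply/imsetP/idP.
  by case=> p hp ->; have [D hD hpD] := hcov hp; rewrite (key _ _ hD hpD).
move=> hC; have [hCF hCA] := ch_in hC.
have : C != set0 by apply: hne.
case/set0Pn => v hv; exists v; first by rewrite (subsetP (proper_sub hCA)).
by rewrite (key _ _ hC hv).
Qed.


Lemma nc1 Fs : A != set0 -> (forall a b, a \in A -> b \in A -> connect (rT Fs) a b) -> nc Fs = 1.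
Proof.
move=> /set0Pn[a0 ha0] hc.
have key : forall p, p \in A -> comp Fs p = A.
  move=> p hp; apply/setP => q; rewrite inE; apply/idP/idP => h; last exact: hc.
  by apply: (conn_ind (P := fun z => z \in A)) h => // x y _ /= /and3P[].
rewrite /nc (_ : [set comp Fs p | p in A] = [set A]) ?cards1 //.
apply/setP => C; rewrite inE; apply/imsetP/eqP => [[p hp ->]|->]; first exact: key.
by exists a0; rewrite ?key.
Qed.

Lemma pair_in (x y p0 q0 : V) : [set x; y] = [set p0; q0] ->
  (x == p0) || (x == q0).
Proof. move=> h; have : x \in [set x; y] by rewrite !inE eqxx.
by rewrite h !inE. Qed.

Lemma bridge Fs p0 q0 : p0 \in A -> q0 \in A -> ~~ connect (rT Fs) p0 q0 ->
  nc Fs = nc ([set p0; q0] |: Fs) + 1.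
Proof.
move=> hp0 hq0 hnc.
set e := [set p0; q0]; set Fs' := e |: Fs.
set c := connect (rT Fs); set c' := connect (rT Fs').
have mono : forall a b, c a b -> c' a b by move=> a b; apply: cT_mono; apply: subsetUr.
have edge : c' p0 q0.
  by apply: connect1; rewrite /= hp0 hq0 /= /Fs' setU11 orbT.
set U := comp Fs p0 :|: comp Fs q0.
have inU : forall a, (a \in U) = c p0 a || c q0 a by move=> a; rewrite !inE.
have stepE : forall x y, rT Fs' x y -> rT Fs x y \/ ([set x; y] = e /\ x \in A /\ y \in A).
  move=> x y /= /and3P[hx hy]; rewrite /Fs' in_setU1 => /orP[h|/orP[/eqP h|h]].
  - by left; rewrite hx hy h.
  - by right.
  - by left; rewrite hx hy h orbT.
have cp0 : forall a, a \in U -> c' p0 a.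
  move=> a; rewrite inU => /orP[/mono//|/mono h]; exact: connect_trans edge h.
have hb : forall a, a \in U -> comp Fs' a = U.
  move=> a ha; apply/setP => z; rewrite [in LHS]inE; apply/idP/idP => h.
    apply: (conn_ind (P := fun z => z \in U)) h => // x y hx /stepE[h|[h _]].
      rewrite inU; move: hx; rewrite inU => /orP[h1|h1]; apply/orP; [left|right];
      by rewrite /c in h1 *; apply: (connect_trans h1); apply: connect1.
    have hy : y \in e by rewrite -h !inE eqxx orbT.
    by move: hy; rewrite !inE => /orP[/eqP->|/eqP->]; rewrite connect0 ?orbT.
  apply: connect_trans (cp0 _ h); rewrite cT_sym; exact: cp0.
have hc : forall a, a \notin U -> comp Fs' a = comp Fs a.
  move=> a ha; apply/setP => z; rewrite !inE; apply/idP/idP => h; last exact: mono.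
  have c0 : c a a by apply: connect0.
  apply: (conn_ind (P := fun z => c a z) c0) h => x y hx /stepE[h|[h _]].
    by rewrite /c in hx *; apply: (connect_trans hx); apply: connect1.
  have := pair_in h; move: ha; rewrite inU negb_or => /andP[n1 n2].
  case/orP => /eqP hxe; rewrite hxe in hx; [move: n1|move: n2] => /negP n; exfalso; apply: n; by rewrite /c cT_sym.
set Rr := [set comp Fs p | p in [set p in A | p \notin U]].
have hI : [set comp Fs p | p in A] = comp Fs p0 |: (comp Fs q0 |: Rr).
  apply/setP => C; rewrite !inE; apply/imsetP/idP => [[p hp ->]|].
    case hpU: (p \in U).
      move: hpU; rewrite inU => /orP[h|h]; rewrite -(comp_eq h) eqxx ?orbT //.
    by rewrite (imset_f (comp Fs)) ?orbT // inE hp hpU.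
  case/orP => [/eqP->|/orP[/eqP->|/imsetP[p]]]; [by exists p0|by exists q0|].
  by rewrite inE => /andP[hp _] ->; exists p.
have hI' : [set comp Fs' p | p in A] = U |: Rr.
  apply/setP => C; rewrite !inE; apply/imsetP/idP => [[p hp ->]|].
    case hpU: (p \in U); first by rewrite hb ?hpU ?eqxx.
    by rewrite hc ?hpU // (imset_f (comp Fs)) ?orbT // inE hp hpU.
  case/orP => [/eqP->|/imsetP[p]]; first by exists p0; rewrite // hb // inE inE connect0.
  by rewrite inE => /andP[hp hpU] ->; exists p; rewrite // hc.
have notR : forall a, a \in U -> comp Fs a \notin Rr.
  move=> a ha; apply/imsetP => -[p]; rewrite inE => /andP[_ hpU] h.
  move: hpU; rewrite inU; apply/negP/negPn.
  move: ha; rewrite inU => /orP[h1|h1]; apply/orP; [left|right];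
  apply: connect_trans h1 _; have : p \in comp Fs p by rewrite inE connect0.
  by rewrite -h inE.
  by rewrite -h inE.
have p0U : p0 \in U by rewrite inU /c connect0.
have q0U : q0 \in U by rewrite inU /c connect0 orbT.
rewrite /nc hI hI' !cardsU1 in_setU1 negb_or (notR _ p0U) (notR _ q0U).
have -> : comp Fs p0 != comp Fs q0.
  apply/eqP => h; move: hnc; have : q0 \in comp Fs q0 by rewrite inE connect0.
  by rewrite -h inE => ->.
have -> : U \notin Rr.
  apply/imsetP => -[p]; rewrite inE => /andP[_ hpU] h.
  have : p \in comp Fs p by rewrite inE connect0.
  by rewrite -h => hp; move: hpU; rewrite hp.
by rewrite addnC.
Qed.

Lemma tree_count (E Tf : {set {set V}}) : simple_graph E -> A != set0 ->
  spanning_tree_contr E F A Tf -> #|Tf| + 1 = #|children F A|.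
Proof.
move=> hsimp hA [hsub [hconn hmin]].
have shape : forall e, e \in Tf -> exists p0 q0, [/\ e = [set p0; q0], p0 != q0, p0 \in A & q0 \in A].
  move=> e he; have := subsetP hsub e he; rewrite !inE => /andP[/andP[hE heA] _].
  have := hsimp e hE; move/eqP/cards2P => [p0 [q0 [hpq he']]].
  exists p0, q0; split => //; apply: (subsetP heA); by rewrite he' !inE eqxx ?orbT.
have nobr : forall (Fs : {set {set V}}) e p0 q0, Fs \subset Tf -> e \in Fs -> e = [set p0; q0] ->
    ~~ connect (rT (Fs :\ e)) p0 q0.
  move=> Fs e p0 q0 hFs heF he; apply/negP => hc.
  have hc' : connect (rT (Tf :\ e)) p0 q0 by apply: cT_mono hc; apply: setSD.
  apply: (hmin e (subsetP hFs e heF)) => a b ha hb.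
  apply: connect_sub (hconn a b ha hb) => x y /= /and3P[hx hy].
  case/orP => [hs|hT].
    by apply: connect1; rewrite /= hx hy hs.
  case hxy : ([set x; y] == e).
    move/eqP: hxy; rewrite he => hxy.
    have := pair_in hxy; rewrite setUC in hxy; have := pair_in hxy.
    case/orP => /eqP-> /orP[] /eqP->; rewrite ?connect0 //; first [move: hc'; rewrite he => h; exact: h | move: hc'; rewrite cT_sym he => h; exact: h].
  by apply: connect1; rewrite /= hx hy !inE hxy hT !orbT.
have main : forall n (Fs : {set {set V}}), #|Fs| = n -> Fs \subset Tf -> nc Fs + #|Fs| = #|children F A|.
  elim => [|n IH] Fs hn hFs.
    by move/eqP: hn; rewrite cards_eq0 => /eqP->; rewrite cards0 addn0 nc0.
  have : Fs != set0 by rewrite -card_gt0 hn.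
  case/set0Pn => e he; have [p0 [q0 [he' hpq hp0 hq0]]] := shape e (subsetP hFs e he).
  have h1 := nobr _ _ _ _ hFs he he'.
  have hb := bridge hp0 hq0 h1.
  rewrite -he' setD1K // in hb.
  have hcard : #|Fs| = #|Fs :\ e| + 1 by rewrite (cardsD1 e Fs) he addnC.
  have hn' : #|Fs :\ e| = n by move: hn; rewrite hcard addn1 => -[].
  have := IH _ hn' (subset_trans (subsetDl _ _) hFs).
  rewrite hb hcard => <-; by rewrite addnA addnC addnA [_ + 1]addnC.
have := main _ Tf erefl (subxx _).
by rewrite nc1 // addnC.
Qed.

End Graph.
End Lam.

End M_Comb.
Import M_Comb.

Module M_Lam2.
Set Implicit Arguments. Unset Strict Implicit. Unset Printing Implicit Defensive.
Import Order.TTheory GRing.Theory Num.Theory.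
Local Open Scope ring_scope.

Section Lam2.
Variables (R : realType) (V : finType) (E : {set {set V}}).
Hypothesis hsimp : simple_graph E.
Implicit Types (F : {set {set V}}) (A B C D S : {set V}) (x : {set V} -> R).

Lemma xsumE x S : xsum x (Eset E S) = \sum_(e in E) ((e \subset S)%:R * x e).
Proof.
rewrite /xsum big_mkcond [RHS]big_mkcond; apply: eq_bigr => e _.
by rewrite inE; case: (e \in E); case: (e \subset S) => /=; rewrite ?mul1r ?mul0r.
Qed.

Lemma xsumEV x : xsum x (Eset E [set: V]) = xsum x E.
Proof. by rewrite /xsum; apply: eq_bigl => e; rewrite inE subsetT andbT. Qed.

Lemma pst_le x S : in_PST E x -> S != set0 -> xsum x (Eset E S) <= #|S|%:R - 1.
Proof.
move=> [h0 [hS hE]] hne.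
have [->|hT] := eqVneq S [set: V]; first by rewrite xsumEV hE cardsT.
by apply: hS => //; rewrite properT.
Qed.

Lemma xsum_ge0 x (G : {set {set V}}) : in_PST E x -> G \subset E -> 0 <= xsum x G.
Proof. by move=> [h0 _] hG; apply: sumr_ge0 => e he; apply: h0; apply: (subsetP hG). Qed.

Lemma edge_sub1 e v : e \in E -> ~~ (e \subset [set v]).
Proof.
move=> he; apply/negP => /subset_leq_card; rewrite cards1 (hsimp he) //.
Qed.

Lemma edge_ne e : e \in E -> e != set0.
Proof. by move=> he; rewrite -card_gt0 (hsimp he). Qed.

Section LD.
Variables (x : {set V} -> R) (F : {set {set V}}).
Hypothesis hx : in_PST E x.
Hypothesis hF : laminar_decomp E x F.

Lemma ld_lam : laminar F. Proof. by case: hF. Qed.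
Lemma ld_tight A : A \in F -> tight E x A. Proof. by case: hF => _ [h _]; apply: h. Qed.
Lemma ld_ne A : A \in F -> A != set0.
Proof. by move/ld_tight; rewrite /tight => /andP[]. Qed.

Lemma ld_add A : tight E x A ->
  (forall B, B \in F -> [|| A \subset B, B \subset A | [disjoint A & B]]) -> A \in F.
Proof.
move=> hA hB; case: hF => hlam [ht hmax].
have ht' : forall B, B \in A |: F -> tight E x B.
  by move=> B; rewrite !inE => /orP[/eqP->|]; [exact: hA | apply: ht].
have := hmax (A |: F) (lam_add hlam hB) ht' (subsetUr _ _).
by move=> h; rewrite -h setU11.
Qed.

Lemma ld_single v : [set v] \in F.
Proof.
apply: ld_add.
  rewrite /tight; apply/andP; split; first by apply/set0Pn; exists v; rewrite inE.
  rewrite cards1 subrr /xsum big_pred0 // => e; rewrite inE.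
  by apply/negP => /andP[he hs]; move: (edge_sub1 v he); rewrite hs.
move=> B _; case hv: (v \in B); first by rewrite sub1set hv.
by rewrite disjoints1 hv !orbT.
Qed.

Lemma ld_top : #|V| != 0%N -> [set: V] \in F.
Proof.
move=> hV; apply: ld_add; last by move=> B _; rewrite subsetT orbT.
rewrite /tight -card_gt0 cardsT lt0n hV /= xsumEV.
by case: hx => _ [_ ->].
Qed.

End LD.

Lemma uncross x A B : in_PST E x -> tight E x A -> tight E x B -> A :&: B != set0 ->
  [/\ tight E x (A :|: B), tight E x (A :&: B) &
    forall e, e \in E -> e \subset A :|: B -> ~~ (e \subset A) -> ~~ (e \subset B) -> x e = 0].
Proof.
move=> hx /andP[hA0 /eqP hA] /andP[hB0 /eqP hB] hI.
have hU0 : A :|: B != set0.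
  by case/set0Pn: hA0 => v hv; apply/set0Pn; exists v; rewrite inE hv.
pose cr := fun e : {set V} => [&& e \subset A :|: B, ~~ (e \subset A) & ~~ (e \subset B)].
have hid : forall e : {set V}, (e \subset A :|: B)%:R = (e \subset A)%:R + (e \subset B)%:R
    - (e \subset A :&: B)%:R + (cr e)%:R :> R.
  move=> e; rewrite subsetI /cr.
  case ha: (e \subset A); case hb: (e \subset B) => /=.
  - by rewrite (subset_trans ha) ?subsetUl //= addrK addr0.
  - by rewrite (subset_trans ha) ?subsetUl //= !addr0 subr0.
  - by rewrite (subset_trans hb) ?subsetUr //= !add0r subr0 addr0.
  - by case: (e \subset A :|: B) => /=; rewrite !add0r ?subr0 ?oppr0 ?add0r.
have hsum : xsum x (Eset E (A :|: B)) = xsum x (Eset E A) + xsum x (Eset E B)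
    - xsum x (Eset E (A :&: B)) + \sum_(e in E) ((cr e)%:R * x e).
  rewrite !xsumE -big_split /= -sumrB -big_split /=; apply: eq_bigr => e _; rewrite hid; ring.
have hc0 : 0 <= \sum_(e in E) ((cr e)%:R * x e).
  by apply: sumr_ge0 => e he; case: hx => h0 _; rewrite mulr_ge0 ?ler0n ?h0.
have hUle := pst_le hx hU0; have hIle := pst_le hx hI.
have hcard : (#|A :|: B|%:R + #|A :&: B|%:R : R) = #|A|%:R + #|B|%:R by rewrite -!natrD cardsUI.
have hc : \sum_(e in E) ((cr e)%:R * x e) = 0 by lra.
have hIeq : xsum x (Eset E (A :&: B)) = #|A :&: B|%:R - 1 by lra.
split.
- by rewrite /tight hU0 /=; apply/eqP; lra.
- by rewrite /tight hI /=; apply/eqP.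
- move=> e he heU heA heB.
  have hpos : forall e0, e0 \in E -> 0 <= (cr e0)%:R * x e0.
    by move=> e0 he0; case: hx => h0 _; rewrite mulr_ge0 ?ler0n ?h0.
  have := psumr_eq0P hpos hc he.
  by rewrite /cr heU heA heB /= mul1r.
Qed.

End Lam2.

End M_Lam2.
Import M_Lam2.

Module M_Main1.
Set Implicit Arguments. Unset Strict Implicit. Unset Printing Implicit Defensive.
Import Order.TTheory GRing.Theory Num.Theory.
Local Open Scope ring_scope.

Section K.
Variables (R : realType) (V : finType) (E : {set {set V}}).
Hypothesis hsimp : simple_graph E.
Variables (x' : {set V} -> R) (L' : {set {set V}}) (Tf : {set V} -> {set {set V}}) (T : {set {set V}}).
Hypothesis hx' : in_PST E x'.
Hypothesis hL' : laminar_decomp E x' L'.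
Hypothesis hTf : forall L0, L0 \in L' -> Tf L0 \subset supp E x' /\ spanning_tree_contr E L' L0 (Tf L0).
Hypothesis hT : T = \bigcup_(L0 in L') Tf L0.

Definition cnt (A : {set V}) := #|[set e in T | e \subset A]|.

Lemma cnt_sum A : cnt A = (\sum_(e in T) (e \subset A))%N.
Proof.
rewrite /cnt card_sumb2 [RHS]big_mkcond; apply: eq_bigr => e _; rewrite inE.
by case: (e \in T).
Qed.

Lemma Eg_props F B e : e \in Eg E F B ->
  [/\ e \in E, e \subset B & forall C, C \in children F B -> ~~ (e \subset C)].
Proof.
rewrite !inE => /andP[/andP[he heB] /forallP hC]; split => // C hCB.
by have := hC C; rewrite hCB.
Qed.

Lemma T_props e : e \in T -> exists2 B, B \in L' & e \in Tf B.
Proof. by rewrite hT => /bigcupP[B hB he]; exists B. Qed.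

Lemma TfT B : B \in L' -> Tf B \subset T.
Proof. by move=> hB; rewrite hT (bigcup_sup B). Qed.

Lemma TfEg B e : B \in L' -> e \in Tf B -> e \in Eg E L' B.
Proof. by move=> hB he; case: (hTf hB) => _ [hs _]; apply: (subsetP hs). Qed.

Lemma T_E e : e \in T -> e \in E.
Proof. by case/T_props => B hB /(TfEg hB) /Eg_props[]. Qed.

Lemma Ksing A : A \in L' -> (#|A| <= 1)%N -> cnt A = 0%N.
Proof.
move=> hA h1; apply/eqP; rewrite cards_eq0; apply/eqP/setP => e; rewrite !inE.
apply/negbTE/negP => /andP[/T_E he /subset_leq_card]; rewrite (hsimp he) => h.
by move: (leq_trans h h1).
Qed.

Lemma Kpoint A e : A \in L' -> (1 < #|A|)%N -> e \in T ->
  (e \subset A : nat) = ((e \in Tf A) + \sum_(C in children L' A) (e \subset C))%N.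
Proof.
move=> hA hA1 heT.
have hlam := ld_lam hL'.
have [B hB heB] := T_props heT.
have [heE heBs heBc] := Eg_props (TfEg hB heB).
have hne : e != set0 by exact: (edge_ne hsimp heE).
have hsing := ld_single hsimp hL'.
have hcov : forall v, v \in A -> exists2 C, C \in children L' A & v \in C.
  by move=> v hv; apply: ch_cover hsing hA1 hv.
rewrite (@sum_sub _ L' A hlam) //.
case hTA: (e \in Tf A).
  have [_ heA hc] := Eg_props (TfEg hA hTA).
  rewrite heA; suff -> : [exists C in children L' A, e \subset C] = false by [].
  by apply/negbTE/existsP => -[C /andP[hC heC]]; move: (hc C hC); rewrite heC.
have hBA : B != A by apply: contraFneq hTA => <-.
case heA: (e \subset A); last first.
  suff -> : [exists C in children L' A, e \subset C] = false by [].
  apply/negbTE/existsP => -[C /andP[hC heC]]; have [_ /proper_sub hCA] := ch_in hC.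
  by move: heA; rewrite (subset_trans heC hCA).
suff -> : [exists C in children L' A, e \subset C] by [].
case/or3P: (hlam _ _ hA hB) => h.
- have hp : A \proper B by rewrite properEneq eq_sym hBA h.
  have [C hC hAC] := ch_above hA hp.
  by move: (heBc C hC); rewrite (subset_trans heA hAC).
- have hp : B \proper A by rewrite properEneq hBA h.
  have [C hC hBC] := ch_above hB hp.
  by apply/existsP; exists C; rewrite hC (subset_trans heBs hBC).
- case/set0Pn: hne => v hv; move: h; rewrite disjoint_subset => /subsetP/(_ v).
  by rewrite (subsetP heA) // inE (subsetP heBs) // => /(_ isT).
Qed.

Lemma Kcount : forall A : {set V}, A \in L' -> (cnt A + 1 = #|A|)%N.
Proof.
have hlam := ld_lam hL'.
have hsing := ld_single hsimp hL'.
suff : forall n (A : {set V}), (#|A| <= n)%N -> A \in L' -> (cnt A + 1 = #|A|)%N.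
  by move=> h A; apply: h (leqnn _).
elim => [|n IH] A hAn hA.
  by move: (ld_ne hL' hA); rewrite -card_gt0; move: hAn; rewrite leqn0 => /eqP->.
have hA0 := ld_ne hL' hA.
case: (leqP #|A| 1) => hA1.
  rewrite Ksing //; move: hA0; rewrite -card_gt0 => h0; apply/eqP.
  by rewrite eqn_leq hA1 h0.
have hcov : forall v, v \in A -> exists2 C, C \in children L' A & v \in C.
  by move=> v hv; apply: ch_cover hsing hA1 hv.
have hchne : forall C, C \in children L' A -> C != set0.
  by move=> C /ch_in[hC _]; exact: (ld_ne hL' hC).
have [_ htree] := hTf hA.
have htc := tree_count hlam hchne hcov hsimp hA0 htree.
have hsplit : cnt A = (#|Tf A| + \sum_(C in children L' A) cnt C)%N.
  rewrite cnt_sum.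
  under eq_bigr => e he do rewrite (Kpoint hA hA1 he).
  rewrite big_split /=; congr (_ + _)%N.
    rewrite card_sumb2 [RHS]big_mkcond [LHS]big_mkcond /=; apply: eq_bigr => e _.
    by case heT: (e \in T); case heA: (e \in Tf A) => //; move: (subsetP (TfT hA) e heA); rewrite heT.
  rewrite exchange_big /=; apply: eq_bigr => C _; by rewrite cnt_sum.
have hIH : forall C, C \in children L' A -> (cnt C + 1 = #|C|)%N.
  move=> C hC; have [hCL hCA] := ch_in hC; apply: IH => //.
  by rewrite -ltnS; apply: leq_trans (proper_card hCA) hAn.
have hcard : (\sum_(C in children L' A) #|C| = #|A|)%N.
  rewrite -[RHS](sum_card hlam hcov (subxx A)); apply: eq_bigr => C hC.
  by have [_ /proper_sub hCA] := ch_in hC; rewrite (setIidPr hCA).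
rewrite hsplit -hcard -addnA (addnC (\sum_(C in _) _)) addnA htc -sum1_card -big_split /=.
by apply: eq_bigr => C hC; rewrite addnC hIH.
Qed.

Section C2.
Variables (xs : {set V} -> R) (L : {set {set V}}).
Hypothesis hxs : in_PST E xs.
Hypothesis hL : laminar_decomp E xs L.
Hypothesis hLL : L \subset L'.
Hypothesis hTs : forall e, e \in T -> 0 < xs e.
Hypothesis hV : #|V| != 0%N.

Lemma tight_ne (S : {set V}) : tight E xs S -> S != set0.
Proof. by case/andP. Qed.

Lemma tight_union (S : {set V}) (cs : seq {set V}) : tight E xs S ->
  (forall C, C \in cs -> tight E xs C /\ C :&: S != set0) ->
  tight E xs (S :|: \bigcup_(C <- cs) C).
Proof.
move=> hS; elim: cs => [|C cs IH] hcs; first by rewrite big_nil setU0.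
rewrite big_cons setUCA setUC.
have [hC hCS] := hcs C (mem_head _ _).
have hU := IH (fun C' hC' => hcs C' (@mem_behead _ (C :: cs) _ hC')).
have hne : (S :|: \bigcup_(C0 <- cs) C0) :&: C != set0.
  case/set0Pn: hCS => v; rewrite !inE => /andP[h1 h2].
  by apply/set0Pn; exists v; rewrite !inE h1 h2.
by case: (uncross hxs hU hC hne).
Qed.

Lemma C2 : forall S, tight E xs S -> (#|S| <= cnt S + 1)%N.
Proof.
have hlamL := ld_lam hL.
have hsingL := ld_single hsimp hL.
have hTopL := ld_top hxs hL hV.
suff : forall n (S : {set V}), (#|S| <= n)%N -> tight E xs S -> (#|S| <= cnt S + 1)%N.
  by move=> h S; apply: h (leqnn _).
elim => [|n IH] S hSn hS.
  by move: (tight_ne hS); rewrite -card_gt0; move: hSn; rewrite leqn0 => /eqP->.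
pose P := fun A : {set V} => (A \in L) && (S \subset A).
have PT : P [set: V] by rewrite /P hTopL subsetT.
case: (@arg_minnP {set V} [set: V] P (fun A => #|A|) PT) => A /andP[hAL hSA] hmin.
have hAL' : A \in L' := subsetP hLL A hAL.
have [hSAe|hSAn] := eqVneq S A.
  by rewrite hSAe (Kcount hAL').
have hSp : S \proper A by rewrite properEneq hSAn hSA.
have hS0 : S != set0 := tight_ne hS.
have hA1 : (1 < #|A|)%N.
  by apply: leq_trans (proper_card hSp); rewrite ltnS card_gt0.
pose ch := children L A.
have hcov : forall v, v \in A -> exists2 C, C \in ch & v \in C.
  by move=> v hv; apply: ch_cover hsingL hA1 hv.
have hchL : forall C, C \in ch -> [/\ C \in L, C \proper A & tight E xs C].
  by move=> C /ch_in[h1 h2]; split => //; exact: (ld_tight hL h1).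
have hchne : forall C, C \in ch -> C != set0.
  by move=> C /hchL[h1 _ _]; exact: (ld_ne hL h1).
have hv1 : forall v : V, [set v] != set0 by move=> v; apply/set0Pn; exists v; rewrite inE.
have chdisj : forall C D v, C \in ch -> D \in ch -> v \in C -> v \in D -> C = D.
  by move=> C D v hC hD hvC hvD; apply: (ch_uniq hlamL hC hD (hv1 v)); rewrite sub1set.
have hmeet : forall C, C \in ch -> C :&: S != set0.
  pose Q := [set C in ch | C :&: S != set0].
  pose Z := S :|: \bigcup_(C <- enum Q) C.
  have hZ : tight E xs Z.
    apply: tight_union => // C; rewrite mem_enum inE => /andP[hC hCS].
    by have [_ _ ?] := hchL C hC.
  have inZ : forall v, v \in Z = (v \in S) || [exists C in Q, v \in C].
    move=> v; rewrite /Z big_enum inE; congr (_ || _).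
    apply/bigcupP/existsP => [[C hC hv]|[C /andP[hC hv]]]; exists C => //; by rewrite hC.
  have hZA : Z \subset A.
    apply/subsetP => v; rewrite inZ => /orP[hv|/existsP[C /andP[hC hv]]].
      exact: (subsetP hSA).
    by move: hC; rewrite inE => /andP[/hchL[_ /proper_sub hCA _] _]; apply: (subsetP hCA).
  have hZL : Z \in L.
    apply: (ld_add hL hZ) => B hB.
    case/or3P: (hlamL _ _ hAL hB) => h.
    - by rewrite (subset_trans hZA h).
    - have [->|hBA] := eqVneq B A; first by rewrite hZA.
      have hBp : B \proper A by rewrite properEneq hBA h.
      have [C hC hBC] := ch_above hB hBp.
      case hCS: (C :&: S != set0).
        apply/orP; right; apply/orP; left; apply/subsetP => v hv.
        rewrite inZ; apply/orP; right; apply/existsP; exists C.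
        by rewrite inE hC hCS (subsetP hBC).
      rewrite -setI_eq0; apply/orP; right; apply/orP; right.
      apply/eqP/setP => v; rewrite in_setI inZ in_set0; apply/negbTE/negP => /andP[/orP[hvS|hvQ] hvB].
        suff : C :&: S != set0 by rewrite hCS.
        by apply/set0Pn; exists v; rewrite !inE hvS (subsetP hBC).
      case/existsP: hvQ => C' /andP[]; rewrite inE => /andP[hC' hC'S] hvC'.
      by move: hCS; rewrite -(chdisj _ _ v hC' hC hvC' (subsetP hBC v hvB)) hC'S.
    - by apply/orP; right; apply/orP; right; apply: disjointWl hZA h.
  have hZA' : Z = A.
    apply/eqP; rewrite eqEcard hZA /=; apply: hmin.
    by rewrite /P hZL /= subsetUl.
  move=> C hC; have /set0Pn[v hv] := hchne C hC.
  have : v \in Z by rewrite hZA'; have [_ /proper_sub hCA _] := hchL C hC; apply: (subsetP hCA).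
  rewrite inZ => /orP[hvS|/existsP[C' /andP[]]].
    by apply/set0Pn; exists v; rewrite inE hv hvS.
  by rewrite inE => /andP[hC' hC'S] hvC'; rewrite -(chdisj _ _ v hC' hC hvC' hv).
have hSC : forall C, C \in ch -> S :&: C != set0 by move=> C hC; rewrite setIC hmeet.
have side : forall e p q Cp Cq, e \in T -> e = [set p; q] -> Cp \in ch -> Cq \in ch ->
    p \in Cp -> q \in Cq -> Cp != Cq -> p \in S.
  move=> e p q Cp Cq heT he hCp hCq hpC hqC hne; apply: contraT => hpS.
  have heE := T_E heT; suff : xs e = 0 by move/eqP; rewrite (negbTE (lt0r_neq0 (hTs heT))).
  have [_ _ hCpt] := hchL Cp hCp; have [_ _ hCqt] := hchL Cq hCq.
  have hqCp : q \notin Cp by apply/negP => h; move/eqP: hne; apply; apply: chdisj h hqC.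
  have hpCq : p \notin Cq by apply/negP => h; move/eqP: hne; apply; apply: chdisj hpC h.
  case hqS: (q \in S).
    have [_ _ hz] := uncross hxs hS hCpt (hSC Cp hCp).
    apply: hz => //; rewrite he.
    + by rewrite subUset !sub1set !inE hpC hqS !orbT.
    + by rewrite subUset !sub1set hqS (negbTE hpS).
    + by rewrite subUset !sub1set hpC (negbTE hqCp) andbF.
  have [hX _ _] := uncross hxs hS hCpt (hSC Cp hCp).
  have hXC : (S :|: Cp) :&: Cq != set0.
    case/set0Pn: (hSC Cq hCq) => v; rewrite !inE => /andP[h1 h2].
    by apply/set0Pn; exists v; rewrite !inE h1 h2.
  have [_ _ hz] := uncross hxs hX hCqt hXC.
  apply: hz => //; rewrite he.
  + by rewrite subUset !sub1set !inE hpC hqC !orbT.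
  + by rewrite subUset !sub1set !inE hqS (negbTE hqCp) andbF.
  + by rewrite subUset !sub1set (negbTE hpCq).
have hbeta : forall e, e \in T -> e \subset A ->
    ~~ [exists C in ch, e \subset C] -> e \subset S.
  move=> e heT heA hnC.
  have heE := T_E heT.
  have := hsimp heE; move/eqP/cards2P => [p [q [hpq he]]].
  have hpA : p \in A by apply: (subsetP heA); rewrite he !inE eqxx.
  have hqA : q \in A by apply: (subsetP heA); rewrite he !inE eqxx orbT.
  have [Cp hCp hpC] := hcov p hpA; have [Cq hCq hqC] := hcov q hqA.
  have hne : Cp != Cq.
    apply/negP => /eqP hCC; move: hnC; apply/negP/negPn/existsP; exists Cp.
    by rewrite hCp he subUset !sub1set hpC hCC hqC.
  rewrite he subUset !sub1set (side e p q Cp Cq) //=.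
  by apply: (side e q p Cq Cp) => //; [rewrite he setUC | rewrite eq_sym].
pose cross := fun e : {set V} => (e \subset A) && ~~ [exists C in ch, e \subset C].
have hptA : forall e, e \in T ->
    (e \subset A : nat) = (cross e + \sum_(C in ch) (e \subset C))%N.
  move=> e heT; have hne := edge_ne hsimp (T_E heT).
  rewrite (@sum_sub _ L A hlamL) // /cross.
  case hex: [exists C in ch, e \subset C]; last by rewrite andbT addn0.
  case/existsP: hex => C /andP[hC heC]; have [_ /proper_sub hCA _] := hchL C hC.
  by rewrite (subset_trans heC hCA).
have hptS : forall e, e \in T ->
    (cross e + \sum_(C in ch) (e \subset S :&: C) <= (e \subset S : nat))%N.
  move=> e heT; have hne := edge_ne hsimp (T_E heT).
  under eq_bigr => C _ do rewrite subsetI.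
  case heS: (e \subset S) => /=.
    rewrite (@sum_sub _ L A hlamL) // /cross.
    by case: [exists C in ch, e \subset C]; rewrite ?andbF ?andbT //=; case: (e \subset A).
  rewrite big1 // addn0 /cross; case heA: (e \subset A) => //=.
  case hex: [exists C in ch, e \subset C] => //=.
  by move: (hbeta e heT heA (negbT hex)); rewrite heS.
pose ncr := (\sum_(e in T) cross e)%N.
have hcA : cnt A = (ncr + \sum_(C in ch) cnt C)%N.
  rewrite cnt_sum; under eq_bigr => e he do rewrite (hptA e he).
  rewrite big_split /=; congr (_ + _)%N.
  by rewrite exchange_big /=; apply: eq_bigr => C _; rewrite cnt_sum.
have hcS : (ncr + \sum_(C in ch) cnt (S :&: C) <= cnt S)%N.
  have -> : (\sum_(C in ch) cnt (S :&: C) = \sum_(e in T) \sum_(C in ch) (e \subset S :&: C))%N.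
    by rewrite exchange_big /=; apply: eq_bigr => C _; rewrite cnt_sum.
  by rewrite /ncr -big_split /= cnt_sum; apply: leq_sum => e he; apply: hptS.
have hKC : forall C, C \in ch -> (cnt C + 1 = #|C|)%N.
  by move=> C /hchL[hC _ _]; apply: Kcount; apply: (subsetP hLL).
have hKA := Kcount hAL'.
have hsumA : (\sum_(C in ch) #|C| = #|A|)%N.
  rewrite -[RHS](sum_card hlamL hcov (subxx A)); apply: eq_bigr => C hC.
  by have [_ /proper_sub hCA _] := hchL C hC; rewrite (setIidPr hCA).
have hsumS : (\sum_(C in ch) #|S :&: C| = #|S|)%N.
  rewrite -[RHS](sum_card hlamL hcov hSA); apply: eq_bigr => C hC.
  by rewrite setIC.
have hIHC : forall C, C \in ch -> (#|S :&: C| <= cnt (S :&: C) + 1)%N.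
  move=> C hC; have [hCL hCA hCt] := hchL C hC.
  have [_ hSCt _] := uncross hxs hS hCt (hSC C hC).
  apply: IH hSCt; rewrite -ltnS; apply: leq_trans hSn.
  rewrite proper_card // properEneq subsetIl andbT; apply/negP => /eqP hE.
  have hSC' : S \subset C by rewrite -hE subsetIr.
  have := hmin C; rewrite /P hCL hSC' => /(_ isT); rewrite leqNgt.
  by rewrite (proper_card hCA).
have e1 : (\sum_(C in ch) (cnt C + 1) = #|A|)%N.
  by rewrite -hsumA; apply: eq_bigr => C hC; rewrite hKC.
have e2 : (\sum_(C in ch) #|S :&: C| <= \sum_(C in ch) (cnt (S :&: C) + 1))%N.
  by apply: leq_sum => C hC; apply: hIHC.
rewrite big_split /= in e1 e2.
move: e1 e2 hcS hKA; rewrite hsumS hcA.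
set a := (\sum_(C in ch) cnt C)%N; set b := (\sum_(C in ch) cnt (S :&: C))%N;
  set m := (\sum_(C in ch) 1)%N.
move=> e1 e2 hcS hKA.
rewrite big_split /= -/b -/m in e2.
clearbody a b m ncr; lia.
Qed.

End C2.

End K.

End M_Main1.
Import M_Main1.

Module M_Main2.
Set Implicit Arguments. Unset Strict Implicit. Unset Printing Implicit Defensive.
Import Order.TTheory GRing.Theory Num.Theory.
Local Open Scope ring_scope.

Section Dual.
Variables (R : realType) (V : finType) (E : {set {set V}}).

Definition ind (F : {set {set V}}) : {set V} -> R := fun i => (i \in F)%:R.

Lemma dot_ind F x : dot (ind F) x = xsum x F.
Proof.
rewrite /dot /xsum [RHS]big_mkcond; apply: eq_bigr => i _.
by rewrite /ind; case: (i \in F); rewrite ?mul1r ?mul0r.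
Qed.

Lemma dotN (a x : {set V} -> R) : dot (fun i => - a i) x = - dot a x.
Proof. by rewrite /dot -sumrN; apply: eq_bigr => i _; rewrite mulNr. Qed.

Lemma dot_cond (F : {set {set V}}) (a x : {set V} -> R) :
  dot (fun i => if i \in F then a i else 0) x = \sum_(i in F) a i * x i.
Proof.
rewrite /dot [RHS]big_mkcond; apply: eq_bigr => i _.
by case: (i \in F); rewrite ?mul0r.
Qed.

Lemma sum_unit (F : unit -> R) : \sum_(u : unit) F u = F tt.
Proof. by rewrite (big_pred1 tt) // => -[]. Qed.

Definition zrow : ({set V} -> R) * R := (fun _ => 0, 0).

Definition base : ({set V} + {set V}) + bool -> ({set V} -> R) * R := fun k =>
  match k with
  | inl (inl e) => if e \in E then ((fun i => - ind [set e] i), 0) else zrow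
  | inl (inr A) => if (A != set0) && (A \proper [set: V]) then (ind (Eset E A), #|A|%:R - 1) else zrow
  | inr true => (ind E, #|V|%:R - 1)
  | inr false => ((fun i => - ind E i), - (#|V|%:R - 1))
  end.

Lemma dot_zrow x : dot zrow.1 x = 0.
Proof. exact: dot0. Qed.

Lemma base_iff x : sat base x <-> in_PST E x.
Proof.
split.
  move=> h; split; [|split].
  - move=> e he; have := h (inl (inl e)); rewrite /= he /= dotN dot_ind /xsum big_set1.
    by rewrite lerNl oppr0.
  - move=> S hS hSp; have := h (inl (inr S)); rewrite /= hS hSp /= dot_ind //.
  - have := h (inr true); have := h (inr false); rewrite /= dotN dot_ind lerN2 => h1 h2.
    by apply/eqP; rewrite eq_le h1 h2.
move=> [h0 [hS hE]] [[e|S]|[|]] /=.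
- case: ifP => he /=; last by rewrite dot_zrow.
  by rewrite dotN dot_ind /xsum big_set1 lerNl oppr0 h0.
- case: ifP => /= [/andP[h1 h2]|_]; last by rewrite dot_zrow.
  by rewrite dot_ind hS.
- by rewrite dot_ind hE.
- by rewrite dotN dot_ind hE.
Qed.

Lemma cyE (Sc : {set {set V}}) (c y x : {set V} -> R) :
  \sum_(e in E) cy E Sc c y e * x e =
  \sum_(e in E) c e * x e + \sum_(S in Sc) y S * xsum x (dset E S).
Proof.
rewrite /cy.
under eq_bigr => e _ do rewrite mulrDl.
rewrite big_split /=; congr (_ + _).
under eq_bigr => e _ do rewrite mulr_suml.
rewrite (exchange_big_dep (fun S => S \in Sc)) /=; last by move=> e S _ /andP[].
apply: eq_bigr => S hS; rewrite /xsum mulr_sumr.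
rewrite [RHS]big_mkcond [LHS]big_mkcond; apply: eq_bigr => e _.
rewrite hS /=; case he: (e \in dset E S).
  by move: he; rewrite inE => /andP[-> _].
by case: (e \in E).
Qed.

Lemma gobjE (Sc : {set {set V}}) b lam (c y x : {set V} -> R) :
  gobj E Sc b lam c y x =
  \sum_(e in E) c e * x e + \sum_(S in Sc) y S * (xsum x (dset E S) - lam * (b S)%:~R).
Proof.
rewrite /gobj cyE -addrA; congr (_ + _).
rewrite mulr_sumr -sumrB; apply: eq_bigr => S _; ring.
Qed.

Lemma gattain Sc b lam (c y : {set V} -> R) lb :
  (exists x : {set V} -> R, in_PST E x) ->
  (forall x, in_PST E x -> lb <= gobj E Sc b lam c y x) ->
  exists2 v, is_g_value E Sc b lam c y v & lb <= v.
Proof.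
move=> [x0 hx0] hlb.
pose G : R -> Prop := fun r => exists x, in_PST E x /\ gobj E Sc b lam c y x = r.
have hG0 : classical_sets.nonempty G by exists (gobj E Sc b lam c y x0); exists x0.
have hGl : classical_sets.lbound G lb by move=> r [x [hx <-]]; apply: hlb.
have hGlb : classical_sets.has_lbound G by exists lb.
pose m := inf G.
have hm1 : forall x, in_PST E x -> m <= gobj E Sc b lam c y x.
  by move=> x hx; apply: (ge_inf hGlb); exists x.
have hlbm : lb <= m by apply: lb_le_inf.
pose g := fun i => if i \in E then cy E Sc c y i else 0.
pose C := lam * \sum_(S in Sc) (b S)%:~R * y S.
have hgd : forall x, gobj E Sc b lam c y x = dot g x - C.
  by move=> x; rewrite /gobj dot_cond.
pose sK : unit -> ({set V} -> R) * R := fun _ => (g, m + C).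
have [[x hx]|hno] := classic (exists x, sat (join base sK) x).
  have hxP : in_PST E x by apply/base_iff => k; exact: (hx (inl k)).
  have := hx (inr tt); rewrite /= => hle.
  exists m => //; split; last exact: hm1.
  exists x; split => //; apply/eqP; rewrite eq_le hm1 // andbT hgd.
  by rewrite lerBlDr.
have [beta hb hd] : exists2 beta, beta < 0 & lderiv (join base sK) (fun _ => 0) beta.
  by apply: farkas => x hx; apply: hno; exists x.
have [w hw hdec] := deriv_decomp (P := in_PST E) (fun x hx => proj2 (base_iff x) hx) hd.
have hk : forall x, in_PST E x -> w tt * (m + C) - beta <= w tt * dot g x.
  move=> x hx; have := hdec x hx; rewrite dot0 !sum_unit /=; lra.
have [hw0|hwp] := eqVneq (w tt) 0.
  by have := hk x0 hx0; rewrite hw0 !mul0r; lra.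
have hwp' : 0 < w tt by rewrite lt_def hwp hw.
have hlb2 : classical_sets.lbound G (m - beta / w tt).
  move=> r [x [hx <-]]; rewrite hgd.
  have h1 : (w tt * (m + C) - beta) / w tt <= dot g x.
    by rewrite ler_pdivrMr // [dot g x * _]mulrC; apply: hk.
  have h2 : (w tt * (m + C) - beta) / w tt = m + C - beta / w tt.
    by field; rewrite gt_eqF.
  rewrite h2 in h1; lra.
have := lb_le_inf hG0 hlb2; rewrite -/m.
have : 0 < - beta / w tt by rewrite divr_gt0 // oppr_gt0.
lra.
Qed.

Lemma strong Sc b lam (c xs : {set V} -> R) v :
  (exists x, feasible E Sc b lam x) -> opt_primal E Sc b lam c xs ->
  (forall y' v', nonneg_on Sc y' -> is_g_value E Sc b lam c y' v' -> v' <= v) ->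
  lin_cost E c xs <= v.
Proof.
move=> [x0 hx0] [hxs hopt] hvmax.
suff H : forall eps, 0 < eps -> lin_cost E c xs - eps <= v.
  rewrite leNgt; apply/negP => hlt.
  have := H ((lin_cost E c xs - v) / 2); rewrite divr_gt0 ?subr_gt0 // => /(_ isT).
  lra.
move=> eps heps.
pose sK : {set V} + unit -> ({set V} -> R) * R := fun k =>
  match k with
  | inl A => if A \in Sc then (ind (dset E A), lam * (b A)%:~R) else zrow
  | inr _ => ((fun i => if i \in E then c i else 0), lin_cost E c xs - eps)
  end.
have hno : forall x, ~ sat (join base sK) x.
  move=> x hx.
  have hP : in_PST E x by apply/base_iff => k; exact: (hx (inl k)).
  have hf : feasible E Sc b lam x.
    split => // S hS; have := hx (inr (inl S)); by rewrite /= hS /= dot_ind.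
  have := hx (inr (inr tt)); rewrite /= dot_cond => hc.
  have := hopt x hf; rewrite /lin_cost => hc2.
  by move: hc; rewrite /lin_cost; lra.
have [beta hb hd] := farkas hno.
have [w hw hdec] := deriv_decomp (P := in_PST E) (fun x hx => proj2 (base_iff x) hx) hd.
pose mu := w (inr tt).
pose D := fun x => \sum_(S in Sc) w (inl S) * (xsum x (dset E S) - lam * (b S)%:~R).
have hsum1 : forall x, \sum_k w k * dot (sK k).1 x =
    \sum_(S in Sc) w (inl S) * xsum x (dset E S) + mu * lin_cost E c x.
  move=> x; rewrite big_sumType sum_unit /= dot_cond; congr (_ + _).
  rewrite [RHS]big_mkcond; apply: eq_bigr => S _.
  by case: (S \in Sc); rewrite /= ?dot_ind ?dot_zrow ?mulr0.
have hsum2 : \sum_k w k * (sK k).2 =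
    \sum_(S in Sc) w (inl S) * (lam * (b S)%:~R) + mu * (lin_cost E c xs - eps).
  rewrite big_sumType sum_unit /=; congr (_ + _).
  rewrite [RHS]big_mkcond; apply: eq_bigr => S _.
  by case: (S \in Sc); rewrite /= ?mulr0.
have hD : forall x, D x = \sum_(S in Sc) w (inl S) * xsum x (dset E S)
    - \sum_(S in Sc) w (inl S) * (lam * (b S)%:~R).
  by move=> x; rewrite /D -sumrB; apply: eq_bigr => S _; rewrite mulrBr.
have hk : forall x, in_PST E x ->
    mu * (lin_cost E c xs - eps) - beta <= D x + mu * lin_cost E c x.
  move=> x hx; have := hdec x hx; rewrite dot0 hsum1 hsum2 hD; lra.
have hD0 : D x0 <= 0.
  rewrite /D; apply: sumr_le0 => S hS; apply: mulr_ge0_le0; first exact: hw.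
  by rewrite subr_le0; case: hx0 => _; apply.
have hx0P : in_PST E x0 by case: hx0.
have [hmu0|hmup] := eqVneq mu 0.
  have := hk x0 hx0P; rewrite hmu0 !mul0r; lra.
have hmu : 0 < mu by rewrite lt_def hmup hw.
pose y' := fun S => w (inl S) / mu.
have hy' : nonneg_on Sc y' by move=> S _; rewrite /y' divr_ge0 ?hw ?ltW.
have hlb : forall x, in_PST E x -> lin_cost E c xs - eps <= gobj E Sc b lam c y' x.
  move=> x hx; rewrite gobjE.
  have -> : \sum_(S in Sc) y' S * (xsum x (dset E S) - lam * (b S)%:~R) = D x / mu.
    by rewrite /D mulr_suml; apply: eq_bigr => S _; rewrite /y' mulrAC.
  have h1 := hk x hx.
  have h2 : (mu * (lin_cost E c xs - eps) - beta) / mu <= (D x + mu * lin_cost E c x) / mu.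
    by rewrite ler_pM2r ?invr_gt0.
  have e1 : (mu * (lin_cost E c xs - eps) - beta) / mu = lin_cost E c xs - eps - beta / mu.
    by field; rewrite gt_eqF.
  have e2 : (D x + mu * lin_cost E c x) / mu = D x / mu + lin_cost E c x.
    by field; rewrite gt_eqF.
  have h3 : 0 < - beta / mu by rewrite divr_gt0 // oppr_gt0.
  rewrite e1 e2 in h2; rewrite /lin_cost in h2 *; lra.
have [v' hv' hle] := gattain (ex_intro _ x0 hx0P) hlb.
exact: le_trans hle (hvmax _ _ hy' hv').
Qed.

End Dual.

End M_Main2.
Import M_Main2.

Module M_Final.
Set Implicit Arguments. Unset Strict Implicit. Unset Printing Implicit Defensive.
Import Order.TTheory GRing.Theory Num.Theory.
Local Open Scope ring_scope.
Lemma eps_exists (R : realFieldType) (I : finType) (P : pred I) (q : I -> R) :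
  (forall i, P i -> 0 < q i) -> exists2 eps, 0 < eps & forall i, P i -> eps <= q i.
Proof.
move=> hq.
suff : forall s : seq I, exists2 eps, 0 < eps & forall i, i \in s -> P i -> eps <= q i.
  by case/(_ (enum I)) => eps he h; exists eps => // i; apply: h; rewrite mem_enum.
elim => [|j s [eps he h]]; first by exists 1.
case hj: (P j).
  exists (Num.min (q j) eps); first by rewrite lt_min he hq.
  move=> i; rewrite inE => /predU1P[->|hi] hPi; first by rewrite ge_min lexx.
  by rewrite ge_min (h i hi hPi) orbT.
exists eps => // i; rewrite inE => /predU1P[->|hi] hPi; first by rewrite hj in hPi.
exact: h.
Qed.

Lemma sum_indT (R : realType) (V : finType) (F T : {set {set V}}) :
  \sum_(e in F) ((e \in T)%:R : R) = (#|F :&: T|)%:R.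
Proof.
rewrite card_sumb2 natr_sum big_mkcond; apply: eq_bigr => e _.
by rewrite inE; case: (e \in F); case: (e \in T).
Qed.

End M_Final.
Import M_Final.

Local Open Scope ring_scope.

Theorem lemma6 (R : realType) (V : finType) (E : {set {set V}})
  (c : {set V} -> R) (Sc : {set {set V}}) (b : {set V} -> int) (lam : R)
  (xs : {set V} -> R) (L : {set {set V}})
  (x' : {set V} -> R) (L' : {set {set V}})
  (Tf : {set V} -> {set {set V}}) (T : {set {set V}})
  (ys : {set V} -> R) :
  simple_graph E -> graph_connected E ->
  (forall e, e \in E -> 0 <= c e) ->
  is_chain Sc ->
  1 < lam ->
  (exists x, feasible E Sc b lam x) ->
  opt_primal E Sc b lam c xs ->
  laminar_decomp E xs L ->
  rainbow_free_decomp E Sc x' L' ->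
  supp E x' \subset supp E xs ->
  L \subset L' ->
  (forall S, S \in Sc -> xsum x' (dset E S) <= xsum xs (dset E S)) ->
  (forall L0, L0 \in L' ->
     Tf L0 \subset supp E x' /\ spanning_tree_contr E L' L0 (Tf L0)) ->
  T = \bigcup_(L0 in L') Tf L0 ->
  opt_dual E Sc b lam c ys ->
  \sum_(e in T) c e <= \sum_(e in E) cy E Sc c ys e * xs e /\
  \sum_(e in E) cy E Sc c ys e * xs e
    = \sum_(e in E) c e * xs e + lam * \sum_(S in Sc) (b S)%:~R * ys S.
Proof.
move=> hsimp _ _ _ _ hfeas hopt hLd hrf hsupp hLL _ hTf hT hdual.
have [hxsF _] := hopt; have [hxsP hxscut] := hxsF.
have [hys [v [[_ hvmin] hvmax]]] := hdual.
have [hx'P [hL'd _]] := hrf.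
set lc := \sum_(e in E) c e * xs e.
have h1 : lc <= v by apply: (strong hfeas hopt hvmax).
have h2 := hvmin xs hxsP.
rewrite gobjE -/lc in h2.
set D := \sum_(S in Sc) ys S * (xsum xs (dset E S) - lam * (b S)%:~R) in h2.
have hD : D <= 0.
  by apply: sumr_le0 => S hS; apply: mulr_ge0_le0; [exact: hys | rewrite subr_le0 hxscut].
have hD0 : D = 0 by apply/eqP; rewrite eq_le hD; lra.
have hv : v = lc by lra.
have hcy := cyE E Sc c ys xs.
have hS1 : \sum_(S in Sc) ys S * xsum xs (dset E S) = lam * \sum_(S in Sc) (b S)%:~R * ys S.
  have : \sum_(S in Sc) ys S * xsum xs (dset E S) - lam * \sum_(S in Sc) (b S)%:~R * ys S = D.
    by rewrite mulr_sumr -sumrB /D; apply: eq_bigr => S _; ring.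
  by rewrite hD0 => /eqP; rewrite subr_eq0 => /eqP.
split; last by rewrite hcy -/lc hS1.
have hV : #|V| != 0%N.
  apply/negP => /eqP h0; case: hxsP => h0' [_ hE].
  have : 0 <= xsum xs E by apply: sumr_ge0 => e he; apply: h0'.
  by rewrite hE h0 /=; lra.
have hTs : forall e, e \in T -> 0 < xs e.
  move=> e; rewrite hT => /bigcupP[B hB heB].
  have := subsetP (proj1 (hTf B hB)) e heB => /(subsetP hsupp).
  by rewrite inE => /andP[].
have hTE : T \subset E.
  apply/subsetP => e; rewrite hT => /bigcupP[B hB heB].
  have := subsetP (proj1 (hTf B hB)) e heB => /(subsetP hsupp).
  by rewrite inE => /andP[].
have hC2 := C2 hsimp hL'd hTf hT hxsP hLd hLL hTs hV.
have hTop := ld_top hx'P hL'd hV.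
have hTcard : (#|T| + 1 = #|V|)%N.
  have := Kcount hsimp hL'd hTf hT hTop; rewrite cardsT.
  suff -> : cnt T [set: V] = #|T| by [].
  rewrite /cnt; suff -> : [set e in T | e \subset [set: V]] = T by [].
  by apply/setP => e; rewrite inE subsetT andbT.
have hET : E :&: T = T by apply/setIidPr.
have hEsT : forall S, Eset E S :&: T = [set e in T | e \subset S].
  move=> S; apply/setP => e; rewrite !inE.
  by case heT: (e \in T); rewrite ?andbF ?andbT // (subsetP hTE).
pose C := lam * \sum_(S in Sc) (b S)%:~R * ys S.
have hmin : forall x, in_PST E x ->
    \sum_(e in E) cy E Sc c ys e * xs e <= \sum_(e in E) cy E Sc c ys e * x e.
  move=> x hx; have := hvmin x hx; rewrite {1}/gobj.
  by rewrite hcy -/lc hS1 hv; lra.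
pose X := fun S => xsum xs (Eset E S).
pose P := fun k : {set V} + {set V} => match k with
  | inl e => e \in T
  | inr A => [&& A != set0, A \proper [set: V] & ~~ tight E xs A] end.
pose q := fun k : {set V} + {set V} => match k with
  | inl e => xs e
  | inr A => (#|A|%:R - 1 - X A) / (X A + 1) end.
have hX0 : forall S, 0 <= X S.
  by move=> S; apply: sumr_ge0 => e; rewrite inE => /andP[he _]; case: hxsP => h0 _; apply: h0.
have [eps heps hepsq] : exists2 eps, 0 < eps & forall k, P k -> eps <= q k.
  apply: eps_exists => -[e /hTs //|S /and3P[hS0 hSp hnt]] /=.
  apply: divr_gt0; last by have := hX0 S; lra.
  have hle := pst_le hxsP hS0.
  rewrite subr_gt0 lt_def hle andbT; apply: contra hnt => /eqP h.
  by rewrite /tight hS0 /= -/(X S) h.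
pose xe := fun e => (1 + eps) * xs e - eps * (e \in T)%:R.
have hxe : forall F : {set {set V}}, xsum xe F = (1 + eps) * xsum xs F - eps * (#|F :&: T|)%:R.
  move=> F; rewrite /xsum /xe sumrB -!mulr_sumr -sum_indT //.
have hxeP : in_PST E xe.
  case: hxsP => h0 [hS hE]; split; [|split].
  - move=> e he; rewrite /xe mulrDl mul1r.
    have hx0 := h0 e he; have hex : 0 <= eps * xs e by rewrite mulr_ge0 // ltW.
    case heT: (e \in T); last by rewrite mulr0 subr0; lra.
    have := hepsq (inl e) heT; rewrite /= mulr1; lra.
  - move=> S hS0 hSp; rewrite hxe hEsT -/(cnt T S).
    have hcnt0 : 0 <= eps * (cnt T S)%:R by rewrite mulr_ge0 // ltW.
    rewrite mulrDl mul1r.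
    case ht: (tight E xs S).
      move: ht; rewrite /tight hS0 /= => /eqP hXS; rewrite hXS.
      have := hC2 S; rewrite /tight hS0 hXS eqxx => /(_ isT) hc.
      have hc' : (#|S|%:R - 1 : R) <= (cnt T S)%:R.
        by rewrite lerBlDr natr1 ler_nat -addn1.
      have := ler_wpM2l (ltW heps) hc'; lra.
    have := hepsq (inr S); rewrite /= hS0 hSp ht => /(_ isT).
    have hX1 : 0 < X S + 1 by have := hX0 S; lra.
    rewrite ler_pdivlMr // => hq.
    have hle := hS S hS0 hSp.
    rewrite -/(X S) in hle *; rewrite mulrDr mulr1 in hq; lra.
  - rewrite hxe hE hET.
    have -> : (#|V|%:R : R) = #|T|%:R + 1 by rewrite natr1 -hTcard addn1.
    ring.
have := hmin xe hxeP.
have -> : \sum_(e in E) cy E Sc c ys e * xe e = (1 + eps) * \sum_(e in E) cy E Sc c ys e * xs e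
    - eps * \sum_(e in E) cy E Sc c ys e * (e \in T)%:R.
  rewrite !mulr_sumr -sumrB; apply: eq_bigr => e _; rewrite /xe; ring.
have hTs' : \sum_(e in E) cy E Sc c ys e * (e \in T)%:R = \sum_(e in T) cy E Sc c ys e.
  rewrite big_mkcond [RHS]big_mkcond; apply: eq_bigr => e _.
  case heT: (e \in T); last by case: (e \in E); rewrite ?mulr0.
  by rewrite (subsetP hTE) // mulr1.
rewrite hTs' => hfin.
have hcT : \sum_(e in T) c e <= \sum_(e in T) cy E Sc c ys e.
  apply: ler_sum => e _; rewrite /cy lerDl; apply: sumr_ge0 => S /andP[hS _].
  exact: hys.
apply: le_trans hcT _.
have : eps * \sum_(e in T) cy E Sc c ys e <= eps * \sum_(e in E) cy E Sc c ys e * xs e.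
  by move: hfin; rewrite mulrDl mul1r; lra.
by rewrite ler_pM2l.
Qed.
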